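(* Let $G$ be a finite group and $X$ a path-connected CW complex with a free cellular $G$-action such that $\mathrm{cat}(X)=\mathrm{TC}(X)$. Then $\mathrm{TC}^{G,\infty}(X)=\mathrm{cat}(X)$.
   Context: $\mathrm{cat}$, $\mathrm{TC}$ are reduced LS category and topological complexity. $PX$ is the path space; $\mathcal{P}_k(X)=\{(\gamma_1,\dots,\gamma_k)\in(PX)^k\mid G\gamma_i(1)=G\gamma_{i+1}(0),\ 1\le i\le k-1\}$, $\pi_k(\gamma_1,\dots,\gamma_k)=(\gamma_1(0),\gamma_k(1))\in X\times X$; $\mathrm{secat}$ is reduced sectional category (least $n$ such that the base is covered by $n+1$ open sets each admitting a homotopy section); $\mathrm{TC}^{G,k}(X)=\mathrm{secat}(\pi_k)$, $\mathrm{TC}^{G,\infty}(X)=\min_k\mathrm{TC}^{G,k}(X)$. *)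

(* Defs.v *)
From HB Require Import structures.
From mathcomp Require Import all_boot all_order all_algebra all_fingroup.
From mathcomp Require Import all_classical all_reals all_analysis.
From mathcomp Require Import Rstruct Rstruct_topology.

Set Implicit Arguments.
Unset Strict Implicit.
Unset Printing Implicit Defensive.

Import Order.TTheory GRing.Theory Num.Theory.
Local Open Scope classical_set_scope.
Local Open Scope ring_scope.

Definition RR : realType := Rdefinitions.R.

Definition unitI : set RR := [set t | 0 <= t <= 1].
Definition II : topologicalType := set_type unitI.

Lemma unitI0 : (0 : RR) \in unitI.
Proof. by rewrite inE /unitI /= lexx ler01. Qed.
Lemma unitI1 : (1 : RR) \in unitI.
Proof. by rewrite inE /unitI /= lexx ler01. Qed.
Definition I0 : II := exist _ 0 unitI0.
Definition I1 : II := exist _ 1 unitI1.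

Definition homotopic (Y Z : topologicalType) (f g : Y -> Z) : Prop :=
  exists H : (Y * II)%type -> Z, continuous H /\
    (forall y, H (y, I0) = f y) /\ (forall y, H (y, I1) = g y).

Definition path_connected_space (X : topologicalType) : Prop :=
  forall x y : X, exists f : II -> X, continuous f /\ f I0 = x /\ f I1 = y.

(* Reduced numerical invariants, valued in nat + {infinity} = option nat *)
Lemma ex_asbool_nat (P : nat -> Prop) :
  (exists n, P n) -> exists n, `[< P n >].
Proof. by case=> n Pn; exists n; apply/asboolP. Qed.

Definition least_nat (P : nat -> Prop) : option nat :=
  match pselect (exists n, P n) with
  | left h => Some (ex_minn (ex_asbool_nat h))
  | right _ => None
  end.

Definition secat_le (E B : topologicalType) (p : E -> B) (n : nat) : Prop :=
  exists U : 'I_n.+1 -> set B,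
    (forall i, open (U i)) /\ (\bigcup_i U i = setT) /\
    forall i, exists s : set_type (U i) -> E,
      continuous s /\ homotopic (p \o s) set_val.

Definition secat (E B : topologicalType) (p : E -> B) : option nat :=
  least_nat (secat_le p).

Definition cat_le (X : topologicalType) (n : nat) : Prop :=
  exists U : 'I_n.+1 -> set X,
    (forall i, open (U i)) /\ (\bigcup_i U i = setT) /\
    forall i, exists x0 : X,
      homotopic (set_val : set_type (U i) -> X) (fun _ => x0).

Definition LScat (X : topologicalType) : option nat := least_nat (@cat_le X).

Definition PX (X : topologicalType) : topologicalType :=
  set_type [set f : {compact-open, II -> X} | continuous f].

Definition pev (X : topologicalType) (g : PX X) (t : II) : X := set_val g t.

Definition path_ends (X : topologicalType) (g : PX X) : (X * X)%type :=
  (pev g I0, pev g I1).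

Definition TC (X : topologicalType) : option nat := secat (@path_ends X).

Definition is_group_action (gT : finGroupType) (X : topologicalType)
    (act : gT -> X -> X) : Prop :=
  (forall x, act 1%g x = x) /\
  (forall g h x, act (g * h)%g x = act g (act h x)) /\
  (forall g, continuous (act g)).

Definition free_group_action (gT : finGroupType) (X : topologicalType)
    (act : gT -> X -> X) : Prop :=
  forall g x, act g x = x -> g = 1%g.

Definition Pk_set (gT : finGroupType) (X : topologicalType)
    (act : gT -> X -> X) (m : nat) : set {ptws 'I_m.+1 -> PX X} :=
  [set gs | forall i j : 'I_m.+1, j = i.+1 :> nat ->
     exists g : gT, act g (pev (gs i) I1) = pev (gs j) I0].

Definition Pk (gT : finGroupType) (X : topologicalType)
    (act : gT -> X -> X) (m : nat) : topologicalType :=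
  set_type (@Pk_set gT X act m).

Definition pik (gT : finGroupType) (X : topologicalType)
    (act : gT -> X -> X) (m : nat) (gs : @Pk gT X act m) : (X * X)%type :=
  (pev (set_val gs ord0) I0, pev (set_val gs ord_max) I1).

(* TC^{G,k}(X) for k = m.+1, and TC^{G,infty}(X) = min_{k >= 1} TC^{G,k}(X). *)
Definition TCG (gT : finGroupType) (X : topologicalType)
    (act : gT -> X -> X) (m : nat) : option nat := secat (@pik gT X act m).

Definition TCGinf (gT : finGroupType) (X : topologicalType)
    (act : gT -> X -> X) : option nat :=
  least_nat (fun n => exists m : nat, secat_le (@pik gT X act m) n).

Definition sqnorm (n : nat) (x : 'rV[RR]_n) : RR := \sum_(i < n) x ord0 i ^+ 2.
Definition Disk (n : nat) : set 'rV[RR]_n := [set x | sqnorm x <= 1].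
Definition ODisk (n : nat) : set 'rV[RR]_n := [set x | sqnorm x < 1].
Definition Sphere (n : nat) : set 'rV[RR]_n := [set x | sqnorm x = 1].
Arguments Disk n : clear implicits.
Arguments ODisk n : clear implicits.
Arguments Sphere n : clear implicits.

(* A CW structure on a (Hausdorff) space X: a family of cells c with
   dimension dim c and characteristic map Phi_c : D^n -> X such that
   - Phi_c is continuous on D^n;
   - Phi_c restricted to the open disk is a homeomorphism onto the open
     cell e_c := Phi_c(int D^n) (injective, and open onto its image);
   - the open cells partition X;
   - Phi_c(S^{n-1}) lies in finitely many open cells of dimension < n;
   - X has the weak topology: A is closed as soon as every Phi_c^{-1}(A)
     is closed in D^n.                                                *)
Record CWstructure (X : topologicalType) := {
  cw_cell : Type;
  cw_dim : cw_cell -> nat;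
  cw_char : forall c, 'rV[RR]_(cw_dim c) -> X;
  cw_char_cont : forall c,
    continuous (fun x : set_type (Disk (cw_dim c)) => @cw_char c (set_val x));
  cw_char_inj : forall c, {in ODisk (cw_dim c) &, injective (@cw_char c)};
  cw_char_open : forall c (V : set (set_type (ODisk (cw_dim c)))), open V ->
    exists W : set X, open W /\
      (@cw_char c) @` (set_val @` V) = W `&` (@cw_char c) @` ODisk (cw_dim c);
  cw_disjoint : forall c d, c <> d ->
    (@cw_char c) @` ODisk (cw_dim c) `&` (@cw_char d) @` ODisk (cw_dim d) = set0;
  cw_cover : forall x : X, exists c, ((@cw_char c) @` ODisk (cw_dim c)) x;
  cw_boundary : forall c, exists (m : nat) (f : 'I_m -> cw_cell),
    (forall j, (cw_dim (f j) < cw_dim c)%N) /\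
    (@cw_char c) @` Sphere (cw_dim c) `<=`
      \bigcup_j (@cw_char (f j)) @` ODisk (cw_dim (f j));
  cw_weak : forall A : set X,
    (forall c, closed ((fun x : set_type (Disk (cw_dim c)) =>
                          @cw_char c (set_val x)) @^-1` A)) -> closed A
}.

Definition open_cell (X : topologicalType) (S : CWstructure X) (c : cw_cell S)
  : set X := (@cw_char X S c) @` ODisk (cw_dim c).

(* X is a CW complex with cell structure S: X Hausdorff plus S. *)
Definition is_CW_complex (X : topologicalType) (S : CWstructure X) : Prop :=
  hausdorff_space X.

Definition cellular_action (gT : finGroupType) (X : topologicalType)
    (S : CWstructure X) (act : gT -> X -> X) : Prop :=
  forall (g : gT) (c : cw_cell S), exists d : cw_cell S,
    act g @` open_cell c = open_cell d.

(* Main.v *)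
Require Import Defs.
From HB Require Import structures.
From mathcomp Require Import all_boot all_order all_algebra all_fingroup.
From mathcomp Require Import all_classical all_reals all_analysis.
From mathcomp Require Import Rstruct Rstruct_topology.
Set Implicit Arguments.
Unset Strict Implicit.
Unset Printing Implicit Defensive.
Import Order.TTheory GRing.Theory Num.Theory.
Local Open Scope classical_set_scope.
Local Open Scope ring_scope.
Lemma cont_into_settype (Y Z : topologicalType) (A : set Z) (f : Y -> set_type A) :
  continuous (set_val \o f) -> continuous f.
Proof. exact: continuous_comp_initial. Qed.
Lemma set_val_cont (Z : topologicalType) (A : set Z) : continuous (set_val : set_type A -> Z).
Proof. exact: initial_continuous. Qed.

Lemma cont_into_prod (Y : topologicalType) (I : eqType) (K : topologicalType) (f : Y -> {ptws I -> K}) :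
  (forall i, continuous (fun y => f y i)) -> continuous f.
Proof.
move=> cf y; apply/cvg_sup => i.
move=> U [?/= [[W oW <-]]] /= Wsfz /filterS; apply; apply: (cf i).
exact: open_nbhs_nbhs.
Qed.
Lemma proj_cont (I : eqType) (K : topologicalType) (i : I) : continuous (fun f : {ptws I -> K} => f i).
Proof. exact: (@proj_continuous I (fun _ => K) i). Qed.

Definition clampr (t : RR) : RR := Num.min (Num.max t 0) 1.
Lemma clamp_in t : clampr t \in unitI.
Proof.
rewrite inE /unitI /= /clampr; apply/andP; split.
  by rewrite le_min ler01 le_max lexx orbT.
by rewrite ge_min lexx orbT.
Qed.
Definition clampI (t : RR) : II := exist _ (clampr t) (clamp_in t).
Lemma clampr_cont : continuous clampr.
Proof.
move=> t.
have h1 : {for t, continuous (fun t : RR^o => Num.max t (0:RR))}.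
  by apply: (@continuous_max RR RR (fun t => t) (fun _ => 0)); [exact: cvg_id| exact: cvg_cst].
have h2 : {for t, continuous (fun t : RR^o => Num.min (Num.max t (0:RR)) 1)}.
  by apply: (@continuous_min RR RR (fun t => Num.max t 0) (fun _ => 1)); [exact: h1| exact: cvg_cst].
exact: h2.
Qed.
Lemma clampI_cont : continuous clampI.
Proof. apply: cont_into_settype; exact: clampr_cont. Qed.
Lemma valI (t : II) : 0 <= set_val t <= 1.
Proof. case: t => /= x hx; by move/set_mem: (hx). Qed.
Lemma clampr_id (t : RR) : 0 <= t <= 1 -> clampr t = t.
Proof. by case/andP=> h0 h1; rewrite /clampr max_l // min_l. Qed.
Lemma clampI_id (t : II) : clampI (set_val t) = t.
Proof. apply: eq_sig_hprop => /=; first by move=> *; exact: Prop_irrelevance.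
by apply: clampr_id; exact: (valI t). Qed.
Lemma II_compact : compact [set: II].
Proof.
have -> : [set: II] = clampI @` `[0, 1]%classic.
  apply/seteqP; split => t // _; exists (set_val t); last exact: clampI_id.
  by rewrite /= in_itv /=; exact: valI.
apply: continuous_compact; last exact: segment_compact.
apply: continuous_subspaceT => x; exact: clampI_cont.
Qed.
Lemma II_lc : locally_compact [set: II].
Proof.
move=> x _; exists setT; rewrite ?withinET; first exact: filterT.
split; [exact: II_compact | exact: closedT].
Qed.
Lemma II_reg : regular_space II.
Proof. exact: uniform_regular. Qed.
Lemma ev_cont (X : topologicalType) : continuous (fun p : PX X * II => pev p.1 p.2).
Proof.
have := @continuous_uncurry_regular (PX X) II X (fun g => set_val g) II_lc II_reg.
move=> h.
have e : (fun p : PX X * II => pev p.1 p.2) = uncurry (fun g : PX X => (set_val g : II -> X)).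
  by apply/funext => -[].
rewrite e; apply: h.
  exact: set_val_cont.
move=> [f hf] /=; exact: (set_mem hf).
Qed.
Lemma cont_comp (A B C : topologicalType) (f : A -> B) (g : B -> C) :
  continuous f -> continuous g -> continuous (fun x => g (f x)).
Proof. by move=> cf cg x; apply: continuous_comp; [exact: cf | exact: cg]. Qed.
Lemma cont_pair (A B C : topologicalType) (f : A -> B) (g : A -> C) :
  continuous f -> continuous g -> continuous (fun x => (f x, g x)).
Proof. by move=> cf cg x; apply: cvg_pair; [exact: cf | exact: cg]. Qed.
Lemma cont_fst (A B : topologicalType) : continuous (@fst A B).
Proof. by move=> x; exact: cvg_fst. Qed.
Lemma cont_snd (A B : topologicalType) : continuous (@snd A B).
Proof. by move=> x; exact: cvg_snd. Qed.
Lemma cont_cst (A B : topologicalType) (b : B) : continuous (fun _ : A => b).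
Proof. by move=> x; exact: cvg_cst. Qed.

Lemma cont_affine (a b : RR) : continuous (fun t : RR => a * t + b).
Proof.
move=> t; apply: cvgD; last exact: cvg_cst.
by apply: cvgM; [exact: cvg_cst | exact: cvg_id].
Qed.
Lemma cont_affI (Y : topologicalType) (a b : RR) :
  continuous (fun p : Y * II => clampI (a * set_val p.2 + b)).
Proof.
have h1 : continuous (fun p : Y * II => set_val p.2) :=
  (cont_comp (@cont_snd Y II) (@set_val_cont _ unitI)).
have h2 : continuous (fun p : Y * II => a * set_val p.2 + b) :=
  cont_comp h1 (@cont_affine a b).
exact: (cont_comp h2 clampI_cont).
Qed.
Lemma clampI0 : clampI 0 = I0.
Proof. by apply: eq_sig_hprop => /=; [move=> *; exact: Prop_irrelevance | rewrite clampr_id // lexx ler01]. Qed.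
Lemma clampI1 : clampI 1 = I1.
Proof. by apply: eq_sig_hprop => /=; [move=> *; exact: Prop_irrelevance | rewrite clampr_id // lexx ler01]. Qed.

Lemma homotopic_cont0 (Y Z : topologicalType) (f g : Y -> Z) : homotopic f g -> continuous f.
Proof.
case=> H [cH [H0 _]].
have -> : f = (fun y => H (y, I0)) by apply/funext => y; rewrite H0.
apply: (cont_comp _ cH); apply: cont_pair; [by move=> ?; exact: cvg_id | exact: cont_cst].
Qed.
Lemma homotopic_refl (Y Z : topologicalType) (f : Y -> Z) : continuous f -> homotopic f f.
Proof.
move=> cf; exists (fun p => f p.1); split => //.
exact: cont_comp (@cont_fst _ _) cf.
Qed.
Lemma homotopic_sym (Y Z : topologicalType) (f g : Y -> Z) : homotopic f g -> homotopic g f.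
Proof.
case=> H [cH [H0 H1]].
exists (fun p => H (p.1, clampI ((-1) * set_val p.2 + 1))); split; last split.
- apply: (cont_comp _ cH); apply: cont_pair; first exact: cont_fst.
  exact: cont_affI.
- by move=> y /=; rewrite mulr0 add0r clampI1.
- by move=> y /=; rewrite mulr1 addNr clampI0.
Qed.
From mathcomp Require Import lra.
Lemma homotopic_trans (Y Z : topologicalType) (f g h : Y -> Z) :
  homotopic f g -> homotopic g h -> homotopic f h.
Proof.
case=> H1 [c1 [H10 H11]] [H2 [c2 [H20 H21]]].
pose F1 := fun p : Y * II => H1 (p.1, clampI (2 * set_val p.2 + 0)).
pose F2 := fun p : Y * II => H2 (p.1, clampI (2 * set_val p.2 + (-1))).
have cF1 : continuous F1 := cont_comp (cont_pair (@cont_fst Y II) (@cont_affI Y 2 0)) c1.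
have cF2 : continuous F2 := cont_comp (cont_pair (@cont_fst Y II) (@cont_affI Y 2 (-1))) c2.
have cv : continuous (fun p : Y * II => set_val p.2) :=
  (cont_comp (@cont_snd Y II) (@set_val_cont _ unitI)).
exists (fun p => if set_val p.2 <= 2^-1 then F1 p else F2 p).
split; last split.
- apply/continuous_subspace_setT.
  have -> : [set: Y * II] = [set p | set_val p.2 <= 2^-1] `|` [set p | 2^-1 <= set_val p.2].
    apply/seteqP; split => p // _; rewrite /=.
    by case: (leP (set_val p.2) (2^-1)) => hp; [left | right] => //; exact: ltW.
  apply: withinU_continuous.
  + have := proj1 (continuous_closedP _) cv [set x | x <= 2^-1] (@closed_le RR (2^-1)).
    by [].
  + have := proj1 (continuous_closedP _) cv [set x | 2^-1 <= x] (@closed_ge RR (2^-1)).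
    by [].
  + apply: (@subspace_eq_continuous _ _ _ F1).
      by move=> p /set_mem /= hp; rewrite /from_subspace /= hp.
    exact: continuous_subspaceT.
  + apply: (@subspace_eq_continuous _ _ _ F2); last exact: continuous_subspaceT.
    move=> p /set_mem /= hp; rewrite /from_subspace /=; case: ifPn => // hp2.
    have e : set_val p.2 = 2^-1 by apply/eqP; rewrite eq_le hp hp2.
    rewrite /F1 /F2 e.
    have -> : 2 * 2^-1 + 0 = 1 :> RR by lra.
    have -> : 2 * 2^-1 + -1 = 0 :> RR by lra.
    by rewrite clampI1 clampI0 H11 H20.
- move=> y /=.
  have -> : (0 <= 2^-1 :> RR) by rewrite invr_ge0 ler0n.
  by rewrite /F1 /= mulr0 addr0 clampI0 H10.
- move=> y /=.
  have -> : (1 <= 2^-1 :> RR) = false by apply/negbTE; rewrite -ltNge; lra.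
  rewrite /F2 /=.
  have -> : 2 * 1 + -1 = 1 :> RR by lra.
  by rewrite clampI1 H21.
Qed.
Definition lc (Y : topologicalType) (T : Type) (h : Y -> T) :=
  forall y, nbhs y [set z | h z = h y].

Lemma lc_cst (Y : topologicalType) (T : Type) (c : T) : lc (fun _ : Y => c).
Proof. by move=> y; apply: nearW. Qed.

Lemma lc_fst (Y W : topologicalType) (T : Type) (h : Y -> T) : lc h -> lc (fun p : Y * W => h p.1).
Proof. move=> hl p; exact: (@cont_fst Y W p _ (hl p.1)). Qed.

Lemma lc_op (Y : topologicalType) (T : Type) (h1 h2 : Y -> T) (op : T -> T -> T) :
  lc h1 -> lc h2 -> lc (fun y => op (h1 y) (h2 y)).
Proof.
move=> l1 l2 y; apply: filterS2 (l1 y) (l2 y) => z /= -> -> //.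
Qed.

Lemma lc_cont (Y Z : topologicalType) (T : Type) (h : Y -> T) (F : T -> Y -> Z) :
  lc h -> (forall t, continuous (F t)) -> continuous (fun y => F (h y) y).
Proof.
move=> hl cF y U nU.
have h1 : nbhs y ((F (h y)) @^-1` U) := cF (h y) y U nU.
apply: filterS2 h1 (hl y) => z /= h1z h2z.
by rewrite h2z.
Qed.
Lemma neq_near (Y X : topologicalType) (a b : Y -> X) (y : Y) :
  hausdorff_space X -> continuous a -> continuous b -> a y <> b y ->
  nbhs y [set z | a z <> b z].
Proof.
move=> hX ca cb neq.
apply: contrapT => hn; apply: neq; apply: hX => A B nA nB.
apply: contrapT => hAB; apply: hn.
have h1 : nbhs y (a @^-1` A) := ca y A nA.
have h2 : nbhs y (b @^-1` B) := cb y B nB.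
apply: filterS2 h1 h2 => z /= az bz eq.
by apply: hAB; exists (a z); split => //; rewrite eq.
Qed.

Lemma act_unique (gT : finGroupType) (X : topologicalType) (act : gT -> X -> X) g h x :
  is_group_action act -> free_group_action act -> act g x = act h x -> g = h.
Proof.
move=> [a1 [aM _]] fr e.
have : act (g^-1 * h)%g x = x by rewrite aM -e -aM mulVg a1.
move/fr => H; apply/esym.
by rewrite -[h]mul1g -(mulgV g) -mulgA H mulg1.
Qed.

Lemma lc_witness (Y X : topologicalType) (gT : finGroupType) (act : gT -> X -> X) (a b : Y -> X) :
  hausdorff_space X -> is_group_action act -> free_group_action act ->
  continuous a -> continuous b -> (forall y, exists g, act g (a y) = b y) ->
  exists gs : Y -> gT, lc gs /\ forall y, act (gs y) (a y) = b y.
Proof.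
move=> hX ga fr ca cb ex.
exists (fun y => projT1 (cid (ex y))); split; last by move=> y; exact: projT2 (cid (ex y)).
move=> y; set g0 := projT1 (cid (ex y)).
have e0 : act g0 (a y) = b y := projT2 (cid (ex y)).
have ca' : forall h : gT, continuous (fun z => act h (a z)).
  by move=> h; apply: (cont_comp ca); case: ga => _ [_]; apply.
have hn : forall h : gT, nbhs y [set z | h <> g0 -> act h (a z) <> b z].
  move=> h; case: (pselect (h = g0)) => [-> | hne].
    by apply: nearW => z.
  apply: filterS (neq_near hX (ca' h) cb _); first by move=> z /= H _.
  by move=> e; apply: hne; apply: (act_unique (x := a y) ga fr); rewrite e e0.
apply: filterS (filter_forall _ hn) => z /= hz.
set g1 := projT1 (cid (ex z)).
have e1 : act g1 (a z) = b z := projT2 (cid (ex z)).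
by apply: contrapT => ne; exact: (hz g1 ne e1).
Qed.
Section PartB.
Variables (gT : finGroupType) (X : topologicalType) (act : gT -> X -> X) (x0 : X).
Hypotheses (hX : hausdorff_space X) (pc : path_connected_space X)
  (ga : is_group_action act) (fr : free_group_action act).

Definition Qp (Y : topologicalType) (f : Y -> X) :=
  exists h : Y -> gT, lc h /\ homotopic f (fun y => act (h y) x0).

Lemma Qp_homot (Y : topologicalType) (f f' : Y -> X) : homotopic f f' -> Qp f' -> Qp f.
Proof. move=> hf [h [lh hh]]; exists h; split => //; exact: homotopic_trans hf hh. Qed.

Lemma act_cont (g : gT) : continuous (act g).
Proof. by case: ga => _ [_]; apply. Qed.

Lemma Qp_jump (Y : topologicalType) (a b : Y -> X) (g : Y -> gT) :
  lc g -> (forall y, act (g y) (a y) = b y) -> Qp a -> Qp b.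
Proof.
move=> lg eg [h [lh [K [cK [K0 K1]]]]].
exists (fun y => (g y * h y)%g); split; first exact: lc_op.
exists (fun p => act (g p.1) (K p)); split; last split.
- apply: (@lc_cont _ _ _ (fun p : Y * II => g p.1) (fun t p => act t (K p))).
    exact: lc_fst.
  by move=> t; apply: (cont_comp cK); exact: act_cont.
- by move=> y /=; rewrite K0 eg.
- by move=> y /=; rewrite K1; case: ga => _ [aM _]; rewrite aM.
Qed.

Lemma Qp_final (Y : topologicalType) (f : Y -> X) : Qp f -> homotopic f (fun _ => x0).
Proof.
move=> [h [lh hh]]; apply: homotopic_trans hh _.
have ex : forall a : gT, exists p : II -> X, continuous p /\ p I0 = act a x0 /\ p I1 = x0.
  by move=> a; exact: pc.
pose P a := projT1 (cid (ex a)).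
have PP a : continuous (P a) /\ P a I0 = act a x0 /\ P a I1 = x0 := projT2 (cid (ex a)).
exists (fun p => P (h p.1) p.2); split; last split.
- apply: (@lc_cont _ _ _ (fun p : Y * II => h p.1) (fun t p => P t p.2)).
    exact: lc_fst.
  move=> t; apply: (cont_comp (@cont_snd Y II)); exact: (PP t).1.
- by move=> y /=; rewrite (PP (h y)).2.1.
- by move=> y /=; rewrite (PP (h y)).2.2.
Qed.

Lemma Qp_start (Y : topologicalType) (f : Y -> X) : homotopic f (fun _ => x0) -> Qp f.
Proof.
move=> hf; exists (fun _ => 1%g); split; first exact: lc_cst.
by case: ga => a1 _; under eq_fun do rewrite a1.
Qed.


Lemma partB (m n : nat) : secat_le (@pik gT X act m) n -> cat_le X n.
Proof.
case=> U [oU [cov sec]].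
have cp : continuous (fun x : X => (x0, x)).
  by apply: cont_pair; [exact: cont_cst | move=> x; exact: cvg_id].
exists (fun i => [set x | U i (x0, x)]); split; last split.
- move=> i; exact: (proj1 (continuousP _) cp _ (oU i)).
- apply/seteqP; split => x // _.
  have : (\bigcup_i U i) (x0, x) by rewrite cov.
  by case=> i _ hi; exists i.
- move=> i; exists x0.
  case: (sec i) => s [cs [H [cH [H0 H1]]]].
  set V := [set x | U i (x0, x)].
  pose u (y : set_type V) : set_type (U i) :=
    exist _ (x0, set_val y) (mem_set (set_mem (valP y))).
  have cu : continuous u.
    apply: cont_into_settype.
    by apply: cont_pair; [exact: cont_cst | exact: set_val_cont].
  pose gam (j : 'I_m.+1) (y : set_type V) : PX X := set_val (s (u y)) j.
  have cgam : forall j, continuous (gam j).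
    move=> j.
    have c1 : continuous (fun y => s (u y)) := cont_comp cu cs.
    have c2 : continuous (fun w : Pk act m => set_val w j) :=
      cont_comp (@set_val_cont _ _) (@proj_cont _ _ j).
    exact: (cont_comp c1 c2).
  pose e0 j y := pev (gam j y) I0.
  pose e1 j y := pev (gam j y) I1.
  have hpath : forall j, homotopic (e0 j) (e1 j).
    move=> j; exists (fun p => pev (gam j p.1) p.2); split => //.
    have c1 : continuous (fun p : set_type V * II => (gam j p.1, p.2)) :=
      (cont_pair (cont_comp (@cont_fst _ II) (cgam j)) (@cont_snd _ II)).
    exact: (cont_comp c1 (@ev_cont X)).
  pose K p := H (u p.1, p.2).
  have cK : continuous K.
    have c1 : continuous (fun p : set_type V * II => (u p.1, p.2)) :=
      (cont_pair (cont_comp (@cont_fst _ II) cu) (@cont_snd _ II)).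
    exact: (cont_comp c1 cH).
  have hstart : homotopic (e0 ord0) (fun _ => x0).
    exists (fun p => (K p).1); split; last split.
    + exact: (cont_comp cK (@cont_fst _ _)).
    + by move=> y; rewrite /K H0.
    + by move=> y; rewrite /K H1.
  have hend : homotopic set_val (e1 ord_max).
    apply: homotopic_sym.
    exists (fun p => (K p).2); split; last split.
    + exact: (cont_comp cK (@cont_snd _ _)).
    + by move=> y; rewrite /K H0.
    + by move=> y; rewrite /K H1.
  have ind : forall k, (k <= m)%N -> Qp (e1 (inord k)).
    elim=> [_ | k IH km].
      have -> : inord 0 = ord0 :> 'I_m.+1 by apply: val_inj; rewrite /= inordK.
      exact: (Qp_homot (homotopic_sym (hpath _)) (Qp_start hstart)).
    have km' : (k <= m)%N by apply: ltnW.
    have ex : forall y, exists g, act g (e1 (inord k) y) = e0 (inord k.+1) y.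
      move=> y; have := set_mem (valP (s (u y))).
      move/(_ (inord k) (inord k.+1)); apply.
      by rewrite !inordK // ltnS.
    have ce1 : continuous (e1 (inord k)).
      exact: (homotopic_cont0 (homotopic_sym (hpath (inord k)))).
    have ce0 : continuous (e0 (inord k.+1)).
      exact: (homotopic_cont0 (hpath (inord k.+1))).
    have [gs [lgs egs]] := lc_witness hX ga fr ce1 ce0 ex.
    apply: (Qp_homot (homotopic_sym (hpath _))).
    exact: (Qp_jump lgs egs (IH km')).
  have := ind m (leqnn m).
  have -> : inord m = ord_max :> 'I_m.+1 by apply: val_inj; rewrite /= inordK.
  move=> Qm; apply: Qp_final; exact: (Qp_homot hend Qm).
Qed.

End PartB.

Lemma partA (gT : finGroupType) (X : topologicalType) (act : gT -> X -> X) (n : nat) :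
  secat_le (@path_ends X) n -> secat_le (@pik gT X act 0) n.
Proof.
case=> U [oU [cov sec]]; exists U; split => //; split => // i.
case: (sec i) => s [cs hs].
have mem : forall w, (fun _ : 'I_1 => s w) \in @Pk_set gT X act 0.
  move=> w; apply: mem_set => a b; rewrite (ord1 a) (ord1 b) //.
exists (fun w => exist _ (fun _ : 'I_1 => s w) (mem w)); split.
- apply: cont_into_settype; apply: cont_into_prod => j /=.
  exact: cs.
- exact: hs.
Qed.

Lemma least_natP (P : nat -> Prop) n :
  P n -> exists k, least_nat P = Some k /\ P k /\ (forall j, P j -> (k <= j)%N).
Proof.
move=> Pn; rewrite /least_nat; case: pselect => [h|h]; last by exfalso; apply: h; exists n.
case: ex_minnP => k /asboolP Pk mn; exists k; split => //; split => // j Pj.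
by apply: mn; apply/asboolP.
Qed.

Lemma least_nat_None (P : nat -> Prop) : (forall n, ~ P n) -> least_nat P = None.
Proof. by move=> nP; rewrite /least_nat; case: pselect => // -[n Pn]; case: (nP n). Qed.

Lemma least_nat_Some (P : nat -> Prop) k :
  least_nat P = Some k -> P k /\ forall j, P j -> (k <= j)%N.
Proof.
rewrite /least_nat; case: pselect => // h [<-].
case: ex_minnP => c /asboolP Pc mn; split => // j Pj.
by apply: mn; apply/asboolP.
Qed.

Lemma empty_TC (X : topologicalType) : ~ (exists x : X, True) -> secat_le (@path_ends X) 0.
Proof.
move=> nx; exists (fun _ => setT); split; first by move=> i; exact: openT.
split; first by apply/seteqP; split => // p _; exists ord0.
move=> i.
exists (fun w => False_rect (PX X) (nx (ex_intro _ (set_val w).1 I))); split.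
  by move=> w; case: (nx (ex_intro _ (set_val w).1 I)).
exists (fun p => False_rect (X * X)%type (nx (ex_intro _ (set_val p.1).1 I))); split.
  by move=> p; case: (nx (ex_intro _ (set_val p.1).1 I)).
by split => y; case: (nx (ex_intro _ (set_val y).1 I)).
Qed.

Unset Implicit Arguments.
Theorem mainTheorem15 (gT : finGroupType) (X : topologicalType)
  (S : CWstructure X) (act : gT -> X -> X) :
  is_CW_complex S ->
  path_connected_space X ->
  is_group_action act -> free_group_action act -> cellular_action S act ->
  LScat X = TC X ->
  TCGinf act = LScat X.
Proof.
move=> hX pc ga fr _ hLT.
case: (pselect (exists x : X, True)) => [[x0 _] | nx]; last first.
  have [k [hk _]] := @least_natP (secat_le (@path_ends X)) _ (empty_TC nx).
  move: hLT; rewrite /TC /secat hk => /least_nat_Some [[U [_ [_ hU]]] _].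
  by case: (hU ord0) => x _; case: nx; exists x.
have PB : forall n, (exists m, secat_le (@pik gT X act m) n) -> cat_le X n.
  by move=> n [m hm]; exact: (partB x0 hX pc ga fr hm).
have PA : forall n, secat_le (@path_ends X) n -> exists m, secat_le (@pik gT X act m) n.
  by move=> n h; exists 0%N; exact: partA.
rewrite /TCGinf; case E : (LScat X) => [c|].
  have [cc cmin] := least_nat_Some E.
  move: hLT; rewrite E /TC /secat => /esym /least_nat_Some [tc _].
  have [k [-> [Pk kmin]]] := @least_natP (fun n => exists m, secat_le (@pik gT X act m) n) _ (PA _ tc).
  congr Some; apply/eqP; rewrite eqn_leq kmin //=; first exact: cmin (PB _ Pk).
  exact: PA.
apply: least_nat_None => n Pn.
have [k [hk _]] := @least_natP (@cat_le X) _ (PB _ Pn).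
by move: E; rewrite /LScat hk.
Qed.
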